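(* Let $\mathcal C=\mathrm{code}(\mathcal H,X)\subseteq2^{[n]}$ be a stable hyperplane code. Then $\mathcal C$ has no chamber obstructions: there is no maximal face $\sigma$ of $\mathrm{cham}(\mathcal C)$ for which there exist two distinct faces $T_1\neq T_2$ of $\Gamma(\mathcal C)$ with $\operatorname{link}_{T_1}\Gamma(\mathcal C)=\operatorname{link}_{T_2}\Gamma(\mathcal C)=\Gamma(2^\sigma)$.
   Context: A code is a subset $\mathcal C\subseteq 2^{[n]}$. An oriented affine hyperplane in $\mathbb R^d$ is $H=\{x:w\cdot x-h=0\}$, $w\ne0$, with $H^+=\{w\cdot x-h>0\}$, $H^-=\{w\cdot x-h<0\}$. For $\mathcal H=\{H_1,\dots,H_n\}$ and open convex $X\subseteq\mathbb R^d$, the atom of $\sigma\subseteq[n]$ is $A_\sigma=\bigl(\bigcap_{i\in\sigma}(H_i^+\cap X)\bigr)\setminus\bigcup_{j\notin\sigma}H_j^+$ ($A_\emptyset=X\setminus\bigcup_iH_i^+$), and $\mathrm{code}(\mathcal H,X)=\{\sigma:A_\sigma\ne\emptyset\}$. $(\mathcal H,X)$ is stable if $X$ is open convex and whenever $X\cap\bigcap_{i\in\sigma}H_i\ne\emptyset$, $\dim\bigcap_{i\in\sigma}H_i=d-|\sigma|$; a stable hyperplane code is the code of a stable pair. Polar complex: vertex set $[n]\sqcup\{\bar1,\dots,\bar n\}$; $\Sigma(\sigma)=\sigma\sqcup\{\bar i:i\notin\sigma\}$; $\Gamma(\mathcal C)$ is the complex of all subsets of $\Sigma(\sigma)$, $\sigma\in\mathcal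 C$. For a face $T$, its support $\underline T$ is the set of $i\in[n]$ such that $i\in T$ or $\bar i\in T$. For $S\subseteq[n]$, $\Gamma(2^S)$ is the complex on $S\sqcup\{\bar i:i\in S\}$ whose faces are all subsets containing no pair $\{i,\bar i\}$ ($\Gamma(2^\emptyset)=\{\emptyset\}$). $\operatorname{link}_T\Delta=\{\nu\in\Delta:\nu\cap T=\emptyset,\nu\cup T\in\Delta\}$. The combinatorial chamber complex $\mathrm{cham}(\mathcal C)$ is the set of $\sigma\subseteq[n]$ for which there exists $T\in\Gamma(\mathcal C)$ with $\underline T=[n]\setminus\sigma$ and $\operatorname{link}_T\Gamma(\mathcal C)=\Gamma(2^\sigma)$; it is a simplicial complex. *)

(* Defs.v *)
From HB Require Import structures.
From mathcomp Require Import all_boot all_order all_algebra.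
From mathcomp Require Import all_classical all_reals all_analysis.
Set Implicit Arguments. Unset Strict Implicit. Unset Printing Implicit Defensive.
Import Order.TTheory GRing.Theory Num.Theory.
Import numFieldNormedType.Exports.
Local Open Scope ring_scope.
Local Open Scope classical_set_scope.

Section Geometry.
Variables (R : realType) (d n : nat).
Variables (w : 'I_n -> 'rV[R]_d) (h : 'I_n -> R) (X : set 'rV[R]_d).

Definition hval (i : 'I_n) (x : 'rV[R]_d) : R := \sum_(k < d) w i 0 k * x 0 k - h i.

Definition hpos (i : 'I_n) : set 'rV[R]_d := [set x | 0 < hval i x].
Definition hzero (i : 'I_n) : set 'rV[R]_d := [set x | hval i x = 0].

Definition atom (s : {set 'I_n}) : set 'rV[R]_d :=
  [set x | X x /\ (forall i, i \in s -> hpos i x) /\ (forall j, j \notin s -> ~ hpos j x)].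

Definition hyp_code : {set {set 'I_n}} :=
  [set s | `[< exists x, atom s x >]].

Definition normals_mx (s : {set 'I_n}) : 'M[R]_(d, n) :=
  \matrix_(k < d, i < n) (if i \in s then w i 0 k else 0).

(* dimension of the affine subspace  \bigcap_{i in s} H_i  (when nonempty):
   the dimension of its direction space {u | u . w_i = 0 for all i in s} *)
Definition inter_dim (s : {set 'I_n}) : nat := \rank (kermx (normals_mx s)).

Definition convex_set (A : set 'rV[R]_d) : Prop :=
  forall x y t, A x -> A y -> 0 <= t <= 1 -> A ((1 - t) *: x + t *: y).

Definition stable : Prop :=
  open X /\ convex_set X /\
  forall s : {set 'I_n},
    (exists x, X x /\ forall i, i \in s -> hzero i x) ->
    (inter_dim s + #|s| = d)%N.

End Geometry.

Section Combinatorics.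
Variable n : nat.

(* vertices: inl i = i, inr i = \bar i *)
Definition vert := ('I_n + 'I_n)%type.

Definition Sigma (s : {set 'I_n}) : {set vert} :=
  [set inl i | i in s] :|: [set inr i | i in ~: s].

Definition polar (C : {set {set 'I_n}}) : {set {set vert}} :=
  [set T : {set vert} | [exists s in C, T \subset Sigma s]].

Definition supp (T : {set vert}) : {set 'I_n} :=
  [set i | (inl i \in T) || (inr i \in T)].

Definition polar_full (S : {set 'I_n}) : {set {set vert}} :=
  [set T : {set vert} | (T \subset [set inl i | i in S] :|: [set inr i | i in S])
           && [forall i, ~~ ((inl i \in T) && (inr i \in T))]].

Definition link (T : {set vert}) (D : {set {set vert}}) : {set {set vert}} :=
  [set nu in D | [disjoint nu & T] && (nu :|: T \in D)].

Definition cham (C : {set {set 'I_n}}) : {set {set 'I_n}} :=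
  [set s : {set 'I_n} | [exists T in polar C,
             (supp T == ~: s) && (link T (polar C) == polar_full s)]].

Definition maximal_face (K : {set {set 'I_n}}) (s : {set 'I_n}) : Prop :=
  s \in K /\ forall t, t \in K -> s \subset t -> t = s.

Definition chamber_obstruction (C : {set {set 'I_n}}) : Prop :=
  exists s, maximal_face (cham C) s /\
    exists T1 T2, [/\ T1 \in polar C, T2 \in polar C, T1 <> T2,
                     link T1 (polar C) = polar_full s &
                     link T2 (polar C) = polar_full s].

End Combinatorics.

(* Main.v *)
Require Import Defs.
From HB Require Import structures.
From mathcomp Require Import all_boot all_order all_algebra.
From mathcomp Require Import all_classical all_reals all_analysis.
From mathcomp Require Import ring lra zify.
Import Order.TTheory GRing.Theory Num.Theory.
Import numFieldNormedType.Exports.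
Local Open Scope ring_scope.
Set Implicit Arguments. Unset Strict Implicit. Unset Printing Implicit Defensive.

Local Notation subsetP := fintype.subsetP.
Section Comb.
Variable n : nat.
Definition idx (v : vert n) : 'I_n := match v with inl i => i | inr i => i end.

Lemma SigmaE (s : {set 'I_n}) (v : vert n) :
  (v \in Sigma s) = (match v with inl i => i \in s | inr i => i \notin s end).
Proof.
rewrite /Sigma inE; case: v => i /=; apply/idP/idP.
- by case/orP => /imsetP [j jin E] //; case: E => ->.
- by move=> H; apply/orP; left; apply/imsetP; exists i.
- by case/orP => /imsetP [j jin E] //; case: E => ->; rewrite inE in jin.
- by move=> H; apply/orP; right; apply/imsetP; exists i; rewrite ?inE.
Qed.

Lemma inlr_Sigma (s : {set 'I_n}) i : inl i \in Sigma s -> inr i \in Sigma s -> False.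
Proof. by rewrite !SigmaE => ->. Qed.

Lemma fullE (S : {set 'I_n}) (v : vert n) :
  (v \in [set inl i | i in S] :|: [set inr i | i in S]) = (idx v \in S).
Proof.
rewrite inE; case: v => i /=; apply/idP/idP.
- by case/orP => /imsetP [j jin E] //; case: E => ->.
- by move=> H; apply/orP; left; apply/imsetP; exists i.
- by case/orP => /imsetP [j jin E] //; case: E => ->.
- by move=> H; apply/orP; right; apply/imsetP; exists i.
Qed.

Lemma polar_fullP (S : {set 'I_n}) (nu : {set vert n}) :
  nu \in polar_full S <->
  ((forall v, v \in nu -> idx v \in S) /\ (forall i, inl i \in nu -> inr i \in nu -> False)).
Proof.
rewrite /polar_full inE; split.
- case/andP => /subsetP H /forallP H2; split.
  + by move=> v /H; rewrite fullE.
  + by move=> i a b; move: (H2 i); rewrite a b.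
- case=> H1 H2; apply/andP; split.
  + by apply/subsetP => v /H1; rewrite fullE.
  + apply/forallP => i; apply/negP => /andP [a b]; exact: H2 a b.
Qed.

Lemma polarP (C : {set {set 'I_n}}) (T : {set vert n}) :
  T \in polar C <-> exists c, c \in C /\ T \subset Sigma c.
Proof.
rewrite /polar inE; split.
- by case/existsP => c /andP [a b]; exists c.
- by case=> c [a b]; apply/existsP; exists c; rewrite a b.
Qed.

Lemma linkP (T : {set vert n}) (D : {set {set vert n}}) nu :
  nu \in link T D <-> [/\ nu \in D, (forall v, v \in nu -> v \notin T) & nu :|: T \in D].
Proof.
rewrite /link inE; split.
- case/andP => a /andP [b c]; split => //.
  move=> v vn; apply/negP => vT.
  by move/pred0P: b => /(_ v) /=; rewrite vn vT.
- case=> a b c; rewrite a c andbT /=.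
  apply/pred0P => v /=; apply/negP => /andP [x y]; move: (b v x); by rewrite y.
Qed.

Section FullLink.
Variables (C : {set {set 'I_n}}) (S : {set 'I_n}) (T : {set vert n}).
Hypotheses (HT : T \in polar C) (HL : link T (polar C) = polar_full S).

Lemma fl_notin v : idx v \in S -> v \notin T.
Proof.
move=> vS.
have : [set v] \in polar_full S.
  apply/polar_fullP; split; first by move=> x; rewrite inE => /eqP ->.
  by move=> i; rewrite !inE => /eqP <- /eqP.
rewrite -HL => /linkP [_ H _]; apply: H; by rewrite inE.
Qed.

Lemma fl_in j : j \notin S -> (inl j \in T) || (inr j \in T).
Proof.
move=> jS; case/polarP: HT => c [cC Tc].
set vv : vert n := if j \in c then inl j else inr j.
have vvc : vv \in Sigma c by rewrite /vv; case: ifP => H; rewrite SigmaE ?H.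
case: (boolP ((inl j \in T) || (inr j \in T))) => // Hn.
have vvT : vv \notin T by rewrite negb_or in Hn; case/andP: Hn => H1 H2; rewrite /vv; case: ifP.
have : [set vv] \in link T (polar C).
  apply/linkP; split.
  - apply/polarP; exists c; split => //; apply/subsetP => x; rewrite inE => /eqP ->; done.
  - by move=> x; rewrite inE => /eqP ->.
  - apply/polarP; exists c; split => //; apply/subsetP => x; rewrite inE => /orP [].
    + by rewrite inE => /eqP ->.
    + by move/(subsetP Tc).
rewrite HL => /polar_fullP [H _].
by move: (H vv); rewrite inE eqxx /vv; case: ifP => _ /(_ isT) /=; rewrite (negbTE jS).
Qed.

Lemma fl_pattern (tau : {set 'I_n}) :
  exists c, c \in C /\ T \subset Sigma c /\
     (forall i, i \in S -> (i \in tau -> i \in c) /\ (i \notin tau -> i \notin c)).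
Proof.
pose nu := [set v : vert n | match v with inl i => (i \in S) && (i \in tau)
                                 | inr i => (i \in S) && (i \notin tau) end].
have : nu \in polar_full S.
  apply/polar_fullP; split.
  - by move=> [] i; rewrite inE => /andP [].
  - by move=> i; rewrite !inE => /andP [_ ->] /andP [].
rewrite -HL => /linkP [_ _] /polarP [c [cC sub]].
exists c; split => //; split.
  by apply/subsetP => x xT; apply: (subsetP sub); rewrite inE xT orbT.
move=> i iS; split => H.
- have : inl i \in Sigma c by apply: (subsetP sub); rewrite !inE iS H.
  by rewrite SigmaE.
- have : inr i \in Sigma c by apply: (subsetP sub); rewrite !inE iS H.
  by rewrite SigmaE.
Qed.
End FullLink.
End Comb.

Section Geo.
Variables (R : realType) (d n : nat).
Variables (w : 'I_n -> 'rV[R]_d) (h : 'I_n -> R) (X : set 'rV[R]_d).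
Local Notation f := (hval w h).

Lemma hval_comb i x y t : f i ((1-t)*:x + t*:y) = (1-t) * f i x + t * f i y.
Proof.
rewrite /hval.
have -> : \sum_(k < d) w i 0 k * ((1 - t) *: x + t *: y) 0 k
   = (1-t) * \sum_(k < d) w i 0 k * x 0 k + t * \sum_(k < d) w i 0 k * y 0 k.
  rewrite !big_distrr -big_split /=; apply: eq_bigr => k _; rewrite !mxE; ring.
ring.
Qed.

Lemma hval_lin i p u t : f i (p + t*:u) = f i p + t * \sum_(k < d) w i 0 k * u 0 k.
Proof.
rewrite /hval.
have -> : \sum_(k < d) w i 0 k * (p + t *: u) 0 k
   = \sum_(k < d) w i 0 k * p 0 k + t * \sum_(k < d) w i 0 k * u 0 k.
  rewrite !big_distrr -big_split /=; apply: eq_bigr => k _; rewrite !mxE; ring.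
ring.
Qed.

Lemma comb_pos (u v t : R) : 0 <= t <= 1 -> 0 < u -> 0 < v -> 0 < (1-t)*u + t*v.
Proof. case/andP=> t0 t1 u0 v0; nra. Qed.

Lemma comb_npos (u v t : R) : 0 <= t <= 1 -> u <= 0 -> v <= 0 -> (1-t)*u + t*v <= 0.
Proof. case/andP=> t0 t1 u0 v0; nra. Qed.

Lemma comb_zero (u v t : R) : u = 0 -> v = 0 -> (1-t)*u + t*v = 0.
Proof. by move=> -> ->; rewrite !mulr0 addr0. Qed.

Lemma seg (a b : R) : 0 < a -> b <= 0 -> exists t, 0 <= t <= 1 /\ (1-t)*a + t*b = 0.
Proof.
move=> a0 b0; exists (a / (a - b)); have ab : 0 < a - b by lra.
split.
- apply/andP; split; first by apply: divr_ge0; lra.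
  by rewrite ler_pdivrMr // mul1r; lra.
- field; lra.
Qed.

Lemma cube (S : seq 'I_n) : uniq S -> forall K : set 'rV[R]_d, Defs.convex_set K ->
  (forall tau : {set 'I_n}, exists x, K x /\ forall i, i \in S ->
        (i \in tau -> 0 < f i x) /\ (i \notin tau -> f i x <= 0)) ->
  exists x, K x /\ forall i, i \in S -> f i x = 0.
Proof.
elim: S => [|i0 S IH] /= uS K Kc H.
  by case: (H finset.set0) => x [Kx _]; exists x; split.
case/andP: uS => i0S uS.
pose K' := fun x => K x /\ f i0 x = 0.
have K'c : Defs.convex_set K'.
  move=> x y t [Kx fx] [Ky fy] t01; split; first exact: Kc.
  by rewrite hval_comb fx fy !mulr0 addr0.
case: (IH uS K' K'c).
  move=> tau.
  case: (H (i0 |: tau)) => x1 [Kx1 H1].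
  case: (H (tau :\ i0)) => x2 [Kx2 H2].
  have [a0 _] := H1 i0 (mem_head _ _).
  have [_ b0] := H2 i0 (mem_head _ _).
  have b0' : f i0 x2 <= 0 by apply: b0; rewrite !inE eqxx.
  case: (seg (a0 (setU11 _ _)) b0') => t [t01 ht].
  exists ((1-t)*:x1 + t*:x2); split.
    by split; [exact: Kc | rewrite hval_comb].
  move=> i iS.
  have ii0 : i != i0 by apply: contraNneq i0S => <-.
  have iS' : i \in i0 :: S by rewrite inE iS orbT.
  have [p1 n1] := H1 i iS'.
  have [p2 n2] := H2 i iS'.
  rewrite hval_comb; split => Hi.
  - by apply: comb_pos => //; [apply: p1; rewrite !inE Hi orbT | apply: p2; rewrite !inE Hi ii0].
  - by apply: comb_npos => //; [apply: n1; rewrite !inE (negbTE Hi) (negbTE ii0) | apply: n2; rewrite !inE (negbTE Hi) andbF].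
move=> x [[Kx fx] Hx]; exists x; split => // i; rewrite inE => /orP [/eqP -> //|]; exact: Hx.
Qed.

End Geo.

Section LinAlg.
Variables (F : fieldType) (d n : nat) (s : {set 'I_n}).
Let D : 'M[F]_(#|s|, n) := \matrix_(m < #|s|, j < n) ((j == enum_val m)%:R : F).

Lemma factorD k (M : 'M[F]_(k, n)) : (forall a j, j \notin s -> M a j = 0) ->
  M = (\matrix_(a < k, m < #|s|) M a (enum_val m)) *m D.
Proof.
move=> HM; apply/matrixP => a j; rewrite !mxE.
under eq_bigr => m _ do rewrite !mxE.
case: (boolP (j \in s)) => js.
- rewrite (bigD1 (enum_rank_in js j)) //= enum_rankK_in // eqxx mulr1 big1 ?addr0 //.
  move=> m neq; rewrite (_ : (j == enum_val m) = false) ?mulr0 //.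
  apply/negbTE; apply: contra neq => /eqP E; have K := enum_valK_in js m; rewrite -E in K; by rewrite K.
- rewrite (HM a j js) big1 // => m _.
  rewrite (_ : (j == enum_val m) = false) ?mulr0 //.
  apply/negbTE; apply: contraNneq js => ->; exact: enum_valP.
Qed.

Lemma solve_lin (A : 'M[F]_(d, n)) :
  (forall k j, j \notin s -> A k j = 0) -> \rank A = #|s| ->
  forall e : 'rV[F]_n, (forall j, j \notin s -> e 0 j = 0) -> exists u : 'rV_d, e = u *m A.
Proof.
move=> HA rA e He.
have AD : (A <= D)%MS by rewrite {1}(factorD HA) submxMl.
have DA : (D <= A)%MS.
  case: (mxrank_leqif_sup AD) => _ <-.
  by apply/eqP/anti_leq; rewrite (mxrankS AD) /= rA rank_leq_row.
have eD : (e <= D)%MS.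
  rewrite {1}(factorD (M := e)) ?submxMl // => a j js.
  by rewrite (ord1 a) He.
by apply/submxP; apply: submx_trans eD DA.
Qed.
End LinAlg.

Section Geo2.
Variables (R : realType) (d n : nat).
Variables (w : 'I_n -> 'rV[R]_d) (h : 'I_n -> R) (X : set 'rV[R]_d).
Local Notation f := (hval w h).

Lemma small_list (I : eqType) (P : I -> R -> Prop) (S : seq I) :
  (forall i, exists2 e, 0 < e & forall t, 0 < t -> t < e -> P i t) ->
  exists2 e, 0 < e & forall t, 0 < t -> t < e -> forall i, i \in S -> P i t.
Proof.
move=> H; elim: S => [|i S [e1 e10 H1]]; first by exists 1 => //.
case: (H i) => e2 e20 H2.
exists (Num.min e1 e2); first by rewrite lt_min e10 e20.
move=> t t0; rewrite lt_min => /andP [a b] j; rewrite inE => /orP [/eqP -> |].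
  exact: H2.
exact: H1.
Qed.

Lemma near_point p u : open X -> X p ->
  exists t, 0 < t /\ X (p + t*:u) /\ forall i, f i p != 0 ->
     (0 < f i p -> 0 < f i (p + t*:u)) /\ (f i p < 0 -> f i (p + t*:u) < 0).
Proof.
move=> Xo Xp.
pose P (o : option 'I_n) (t : R) := match o with
  | None => X (p + t*:u)
  | Some i => f i p != 0 ->
     (0 < f i p -> 0 < f i (p + t*:u)) /\ (f i p < 0 -> f i (p + t*:u) < 0) end.
case: (@small_list _ P (enum {: option 'I_n})).
- case=> [i|].
  + rewrite /P; case: (boolP (f i p == 0)) => [_|fi]; first by exists 1.
    set c := \sum_(k < d) w i 0 k * u 0 k.
    have c0 : 0 < `|c| + 1 by rewrite ltr_wpDl.
    have a0 : 0 < `|f i p| by rewrite normr_gt0.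
    exists (`|f i p| / (`|c| + 1)); first by rewrite divr_gt0.
    move=> t t0; rewrite ltr_pdivlMr // => tc _.
    have := lexx `|c|; rewrite ler_norml => /andP [c1 c2].
    rewrite !hval_lin -/c; split => Hs.
    * rewrite (gtr0_norm Hs) in tc; nra.
    * rewrite (ltr0_norm Hs) in tc; nra.
  + have : nbhs p X by apply: open_nbhs_nbhs; split.
    move/nbhs_ballP => [r r0 Hr].
    have c0 : 0 < `|u| + 1 by rewrite ltr_wpDl.
    exists (r / (`|u| + 1)); first by rewrite divr_gt0.
    move=> t t0; rewrite ltr_pdivlMr // => tr.
    apply: Hr; rewrite -ball_normE /= opprD addrA subrr add0r normrN normrZ gtr0_norm //.
    have := normr_ge0 u; nra.
- move=> e e0 H; exists (e / 2); split; first by rewrite divr_gt0.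
  have e2 : e / 2 < e by rewrite ltr_pdivrMr //; lra.
  have e20 : 0 < e / 2 by rewrite divr_gt0.
  split; first by apply: (H (e/2) e20 e2 None); rewrite mem_enum.
  by move=> i; apply: (H (e/2) e20 e2 (Some i)); rewrite mem_enum.
Qed.

End Geo2.

Section Main.
Variables (R : realType) (d n : nat).
Variables (w : 'I_n -> 'rV[R]_d) (h : 'I_n -> R) (X : set 'rV[R]_d).
Local Notation f := (hval w h).
Local Notation C := (hyp_code w h X).

Lemma codeP c : c \in C <-> exists x, atom w h X c x.
Proof. by rewrite inE; split => [/asboolP | H]; [| apply/asboolP]. Qed.

Lemma code_point x : X x -> [set i | 0 < f i x] \in C.
Proof.
move=> Xx; apply/codeP; exists x; split => //; split.
- by move=> i; rewrite inE.
- by move=> j; rewrite inE => /negP H; rewrite /hpos /=.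
Qed.

Lemma cham_point : stable w h X -> forall p, X p -> [set i | f i p == 0] \in cham C.
Proof.
case=> Xo [Xc Hst] p Xp.
set Z := [set i | f i p == 0].
pose T' := [set v : vert n | match v with inl i => 0 < f i p | inr i => f i p < 0 end].
have T'sub : forall c : {set 'I_n}, (forall i, 0 < f i p -> i \in c) -> (forall i, f i p < 0 -> i \notin c) ->
    T' \subset Sigma c.
  move=> c H1 H2; apply/subsetP => -[] i; rewrite inE SigmaE; [exact: H1 | exact: H2].
have T'P : T' \in polar C.
  apply/polarP; exists [set i | 0 < f i p]; split; first exact: code_point.
  apply: T'sub => i; rewrite inE // => H; by rewrite -leNgt ltW.
rewrite inE; apply/existsP; exists T'; rewrite T'P /=; apply/andP; split.
  apply/eqP/setP => i; rewrite /supp !inE.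
  by case: (ltgtP (f i p) 0).
apply/eqP/setP => nu; apply/idP/idP.
- move/linkP => [nuP disj] /polarP [c [cC sub]].
  have inS v : v \in nu -> v \in Sigma c.
    by move=> vn; apply: (subsetP sub); rewrite inE vn.
  have inS' v : v \in T' -> v \in Sigma c.
    by move=> vn; apply: (subsetP sub); rewrite inE vn orbT.
  apply/polar_fullP; split.
  + move=> [] i vin; rewrite /= inE; have := disj _ vin; rewrite inE.
    * case: (ltgtP (f i p) 0) => // H _.
      have := inS' (inr i); rewrite inE => /(_ H) H'.
      by case: (inlr_Sigma (inS _ vin) H').
    * case: (ltgtP (f i p) 0) => // H _.
      have := inS' (inl i); rewrite inE => /(_ H) H'.
      by case: (inlr_Sigma H' (inS _ vin)).
  + by move=> i a b; apply: (inlr_Sigma (inS _ a) (inS _ b)).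
- move/polar_fullP => [H1 H2].
  pose e : 'rV[R]_n := \row_j (if inl j \in nu then 1 else if j \in Z then -1 else 0).
  have rA : \rank (normals_mx w Z) = #|Z|.
    have := Hst Z; rewrite /inter_dim mxrank_ker.
    have := rank_leq_row (normals_mx w Z).
    move=> Hr Hz; have := Hz _; move=> {}Hz.
    have : (d - \rank (normals_mx w Z) + #|Z|)%N = d.
      apply: Hz; exists p; split => // i; rewrite inE => /eqP.
      by rewrite /hzero.
    lia.
  case: (@solve_lin _ d n Z (normals_mx w Z) _ rA e).
  + by move=> k j jZ; rewrite mxE (negbTE jZ).
  + move=> j jZ; rewrite mxE (negbTE jZ); case: ifP => // H.
    by have := H1 _ H; rewrite /= (negbTE jZ).
  move=> u eu.
  case: (near_point w h u Xo Xp) => t [t0 [Xx Hx]].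
  set x := p + t *: u in Xx Hx.
  have fZ i : i \in Z -> f i x = t * e 0 i.
    move=> iZ; rewrite /x hval_lin eu.
    move: (iZ); rewrite inE => /eqP ->; rewrite add0r mxE; congr (_ * _).
    by apply: eq_bigr => k _; rewrite mxE iZ mulrC.
  set c := [set i | 0 < f i x].
  have cC : c \in C by apply: code_point.
  have sub : nu :|: T' \subset Sigma c.
    apply/subsetP => v; rewrite inE => /orP [] vin.
    * have vZ := H1 _ vin; move: vin vZ; case: v => i /= vin iZ; rewrite SigmaE inE fZ // mxE.
      - by rewrite vin mulr1.
      - have -> : (inl i \in nu) = false by apply/negP => a; apply: (H2 i a vin).
        by rewrite iZ -leNgt mulrN1 oppr_le0 ltW.
    * move: vin; case: v => i; rewrite inE SigmaE inE => H.
      - have nz : f i p != 0 by rewrite gt_eqF.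
        by case: (Hx i nz) => /(_ H).
      - have nz : f i p != 0 by rewrite lt_eqF.
        by case: (Hx i nz) => _ /(_ H) H'; rewrite -leNgt ltW.
  apply/linkP; split.
  + apply/polarP; exists c; split => //; apply: (fintype.subset_trans _ sub); exact: finset.subsetUl.
  + move=> [] i vin; have := H1 _ vin; rewrite /= inE => /eqP H; rewrite inE H ltxx //.
  + apply/polarP; exists c; split => //.
Qed.

End Main.

Theorem theoremC (R : realType) (d n : nat)
    (w : 'I_n -> 'rV[R]_d) (h : 'I_n -> R) (X : set 'rV[R]_d) :
  (forall i, w i != 0) ->
  stable w h X ->
  ~ chamber_obstruction (hyp_code w h X).
Proof.
move=> wnz Hs; have Hs' := Hs; case: Hs' => Xo [Xc Hst].
set C := hyp_code w h X.
case=> s [[scham smax] [T1 [T2 [T1p T2p T12 L1 L2]]]].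
have pt : forall T, T \in polar C -> link T (polar C) = polar_full s ->
  exists p, X p /\ (forall j, inl j \in T -> 0 < hval w h j p) /\
     (forall j, inr j \in T -> hval w h j p <= 0) /\ (forall i, i \in s -> hval w h i p = 0).
  move=> T TP TL.
  pose K := fun x => X x /\ (forall j, inl j \in T -> 0 < hval w h j x) /\
                            (forall j, inr j \in T -> hval w h j x <= 0).
  have Kc : Defs.convex_set K.
    move=> x y t [Xx [Px Nx]] [Xy [Py Ny]] t01; split; first exact: Xc.
    by split=> j H; rewrite hval_comb; [apply: comb_pos | apply: comb_npos]; auto.
  case: (cube (w:=w) (h:=h) (enum_uniq (pred_of_set s)) Kc).
    move=> tau; case: (fl_pattern TL tau) => c [cC [sub Hc]].
    case/codeP: cC => x [Xx [Pc Nc]].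
    exists x; split.
      split => //; split => j H.
        by apply: Pc; have := fintype.subsetP sub _ H; rewrite SigmaE.
      have := fintype.subsetP sub _ H; rewrite SigmaE => /Nc; rewrite /hpos /= => /negP.
      by rewrite -leNgt.
    move=> i; rewrite mem_enum => iS; have [a b] := Hc i iS; split => H.
      exact: Pc (a H).
    by have := Nc _ (b H); rewrite /hpos /= => /negP; rewrite -leNgt.
  move=> x [[Xx [Px Nx]] Z]; exists x; do 3 (split => //).
  by move=> i iS; apply: Z; rewrite mem_enum.
case: (pt _ T1p L1) => p1 [X1 [P1 [N1 Z1]]].
case: (pt _ T2p L2) => p2 [X2 [P2 [N2 Z2]]].
have [v Hv] : exists v, (v \in T1) != (v \in T2).
  case: (boolP [exists v, (v \in T1) != (v \in T2)]) => [/existsP //|/existsPn H].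
  by exfalso; apply: T12; apply/setP => v; move: (H v); rewrite negbK => /eqP.
have key : exists j, j \notin s /\
   ((0 < hval w h j p1 /\ hval w h j p2 <= 0) \/ (0 < hval w h j p2 /\ hval w h j p1 <= 0)).
  exists (idx v).
  case E1: (v \in T1); case E2: (v \in T2); rewrite ?E1 ?E2 in Hv => //.
  - have jS : idx v \notin s by apply/negP => /(fl_notin L1); rewrite E1.
    split => //; have := fl_in T2p L2 jS; case: v E1 E2 {Hv} jS => j /= E1 E2 jS; rewrite E2 ?orbF /= => H.
    + by left; split; [apply: P1 | apply: N2].
    + by right; split; [apply: P2 | apply: N1].
  - have jS : idx v \notin s by apply/negP => /(fl_notin L2); rewrite E2.
    split => //; have := fl_in T1p L1 jS; case: v E1 E2 {Hv} jS => j /= E1 E2 jS; rewrite E1 ?orbF /= => H.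
    + by right; split; [apply: P2 | apply: N1].
    + by left; split; [apply: P1 | apply: N2].
have segp : forall x y j, X x -> X y -> (forall i, i \in s -> hval w h i x = 0) ->
    (forall i, i \in s -> hval w h i y = 0) -> 0 < hval w h j x -> hval w h j y <= 0 ->
    exists q, X q /\ (forall i, i \in s -> hval w h i q = 0) /\ hval w h j q = 0.
  move=> x y j Xx Xy Zx Zy a b; case: (seg a b) => t [t01 ht].
  exists ((1-t)*:x + t*:y); split; first exact: Xc.
  split; last by rewrite hval_comb.
  by move=> i iS; rewrite hval_comb; apply: comb_zero; auto.
case: key => j [jS Hj].
have [q [Xq [Zq fq]]] : exists q, X q /\ (forall i, i \in s -> hval w h i q = 0) /\ hval w h j q = 0.
  by case: Hj => [[a b]|[a b]]; [apply: (segp p1 p2) | apply: (segp p2 p1)].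
have := cham_point Hs Xq => Hq.
have sub : s \subset [set i | hval w h i q == 0].
  by apply/fintype.subsetP => i iS; rewrite inE Zq.
have := smax _ Hq sub => E.
by move: jS; rewrite -E inE fq eqxx.
Qed.
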